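(* Let $A=(a(x),dF(x))$ and $B=(b(x),dF(x))$ be games. Then $h(p)=1/\int\frac{1}{pa(x)+(1-p)b(x)}\,dF(x)$ is concave on $[0,1]$.
   Context: A game is a pair $(a(x),dF(x))$ with $dF$ a probability measure on $\mathbb{R}$ and $a\ge0$ measurable with finite positive integral. Convention: $1/(+\infty)=0$. *)

(* Defs.v *)
From HB Require Import structures.
From mathcomp Require Import all_boot all_order all_algebra.
From mathcomp Require Import all_classical all_reals all_analysis.
Import Order.TTheory GRing.Theory Num.Theory.
Local Open Scope classical_set_scope.
Local Open Scope ring_scope.
Local Open Scope ereal_scope.

Definition is_game {R : realType} (F : probability R R) (a : R -> R) : Prop :=
  [/\ measurable_fun setT a,
      (forall x, (0 <= a x)%R),
      0 < \int[F]_x (a x)%:E &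
      \int[F]_x (a x)%:E < +oo].

(* h(p) = 1 / \int 1/(p a(x) + (1-p) b(x)) dF(x), computed in the extended
   reals: 1/0 = +oo inside the integral and 1/(+oo) = 0 (inve). *)
Definition hmix {R : realType} (F : probability R R) (a b : R -> R) (p : R)
  : \bar R :=
  (\int[F]_x (((p * a x + (1 - p) * b x)%R)%:E)^-1)^-1.

(* Main.v *)
Require Import Defs.
From HB Require Import structures.
From mathcomp Require Import all_boot all_order all_algebra.
From mathcomp Require Import all_classical all_reals all_analysis.
From mathcomp Require Import measurable_realfun.
From mathcomp Require Import ring lra.
Import Order.TTheory GRing.Theory Num.Theory.
Set Implicit Arguments.
Unset Strict Implicit.
Local Open Scope classical_set_scope.
Local Open Scope ring_scope.

Lemma real_ineq (R : realType) (t al be u v : R) :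
  0 <= t <= 1 -> 0 <= al -> 0 <= be -> 0 < t * al + (1 - t) * be ->
  0 < u -> 0 < v ->
  (t * u + (1 - t) * v)^-1 <=
  t * al ^+ 2 / (t * al + (1 - t) * be) ^+ 2 / u +
  (1 - t) * be ^+ 2 / (t * al + (1 - t) * be) ^+ 2 / v.
Proof.
move=> /andP[t0 t1] al0 be0 m0 u0 v0.
set m := t * al + (1 - t) * be.
have y0 : 0 < t * u + (1 - t) * v by nra.
rewrite -subr_ge0.
have -> : t * al ^+ 2 / m ^+ 2 / u + (1 - t) * be ^+ 2 / m ^+ 2 / v
    - (t * u + (1 - t) * v)^-1 =
  t * (1 - t) * (al * v - be * u) ^+ 2 / (m ^+ 2 * u * v * (t * u + (1 - t) * v)).
  rewrite /m; field.
  by rewrite (gt_eqF y0) (gt_eqF v0) (gt_eqF u0) gt_eqF.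
apply: divr_ge0.
  apply: mulr_ge0; [apply: mulr_ge0; lra|apply: sqr_ge0].
by apply/ltW; apply: mulr_gt0 => //; apply: mulr_gt0 => //; apply: mulr_gt0 => //; apply: exprn_gt0.
Qed.

Local Open Scope ereal_scope.

Lemma ge0_nNy (R : realType) (x : \bar R) : 0 <= x -> x != -oo.
Proof. by case: x. Qed.

Lemma c_ge0 (R : realType) (t al m : R) : (0 <= t)%R -> (0 <= t * al ^+ 2 / m ^+ 2)%R.
Proof. by move=> t0; apply: divr_ge0; [apply: mulr_ge0 => //; apply: sqr_ge0| apply: sqr_ge0]. Qed.

Lemma pw_u0 (R : realType) (t al be v : R) :
  (0 <= t <= 1)%R -> (0 <= al)%R -> (0 <= be)%R ->
  (0 < t * al + (1 - t) * be)%R -> (0 <= v)%R ->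
  ((t * 0 + (1 - t) * v)%R%:E)^-1 <=
  (t * al ^+ 2 / (t * al + (1 - t) * be) ^+ 2)%R%:E * ((0:R)%:E)^-1 +
  ((1 - t) * be ^+ 2 / (t * al + (1 - t) * be) ^+ 2)%R%:E * (v%:E)^-1.
Proof.
move=> /andP[t0 t1] al0 be0 m0 v0.
rewrite inve0 mulr0 add0r.
have c1ge0 := @c_ge0 R t al (t * al + (1 - t) * be) t0.
have c2ge0 : (0 <= (1 - t) * be ^+ 2 / (t * al + (1 - t) * be) ^+ 2)%R.
  by apply: c_ge0; lra.
have [c1pos|c1z] : (0 < t * al ^+ 2 / (t * al + (1 - t) * be) ^+ 2)%R \/
                   (t * al ^+ 2 / (t * al + (1 - t) * be) ^+ 2)%R = 0%R.
  by move: c1ge0; rewrite le_eqVlt => /orP[/eqP ->|->]; [right|left].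
  rewrite muleC gt0_mulye ?lte_fin // addye ?leey //.
  apply: ge0_nNy; apply: mule_ge0; first by rewrite lee_fin.
  by rewrite inve_ge0 lee_fin.
rewrite c1z mul0e add0e.
have tal : (t * al = 0)%R.
  have : (t * al ^+ 2 = 0)%R.
    move/eqP: c1z; rewrite mulf_eq0 invr_eq0 expf_eq0 /= (gt_eqF m0) orbF.
    by move/eqP.
  by move=> h; nra.
rewrite tal add0r in m0 *.
have t1' : (0 < 1 - t)%R by nra.
have be0' : (0 < be)%R by nra.
have c2E : ((1 - t) * be ^+ 2 / ((1 - t) * be) ^+ 2 = (1 - t)^-1)%R.
  by field; rewrite (gt_eqF t1') (gt_eqF be0').
rewrite c2E.
have [->|vpos] : v = 0%R \/ (0 < v)%R.
  by move: v0; rewrite le_eqVlt => /orP[/eqP <-|->]; [left|right].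
  rewrite mulr0 inve0 muleC gt0_mulye // lte_fin invr_gt0 //.
rewrite !inver (gt_eqF vpos) (gt_eqF (mulr_gt0 t1' vpos)) -EFinM lee_fin.
by rewrite invfM.
Qed.

Lemma pw (R : realType) (t al be u v : R) :
  (0 <= t <= 1)%R -> (0 <= al)%R -> (0 <= be)%R ->
  (0 < t * al + (1 - t) * be)%R -> (0 <= u)%R -> (0 <= v)%R ->
  ((t * u + (1 - t) * v)%R%:E)^-1 <=
  (t * al ^+ 2 / (t * al + (1 - t) * be) ^+ 2)%R%:E * (u%:E)^-1 +
  ((1 - t) * be ^+ 2 / (t * al + (1 - t) * be) ^+ 2)%R%:E * (v%:E)^-1.
Proof.
move=> t01 al0 be0 m0 u0 v0.
have [->|upos] : u = 0%R \/ (0 < u)%R.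
  by move: u0; rewrite le_eqVlt => /orP[/eqP <-|->]; [left|right].
  exact: pw_u0.
have [->|vpos] : v = 0%R \/ (0 < v)%R.
  by move: v0; rewrite le_eqVlt => /orP[/eqP <-|->]; [left|right].
  have e : (1 - (1 - t) = t)%R by ring.
  have t01' : (0 <= 1 - t <= 1)%R by move: t01 => /andP[? ?]; apply/andP; split; lra.
  have m0' : (0 < (1 - t) * be + (1 - (1 - t)) * al)%R by rewrite e addrC.
  have := @pw_u0 R (1 - t) be al u t01' be0 al0 m0' (ltW upos).
  by rewrite e [((1 - t) * 0 + t * u)%R]addrC [((1 - t) * be + t * al)%R]addrC [X in _ <= X]addeC.
move/andP: t01 => [t0 t1].
have y0 : (0 < t * u + (1 - t) * v)%R by nra.
rewrite !inver (gt_eqF y0) (gt_eqF upos) (gt_eqF vpos) -!EFinM -EFinD lee_fin.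
rewrite -!mulrA !mulrA.
have := @real_ineq R t al be u v.
rewrite !(mulrA, divrr).
move=> h; apply: h => //; exact/andP.
Qed.

Lemma measurable_inveR (R : realType) :
  measurable_fun [set: R] (fun r : R => (r%:E)^-1).
Proof.
have -> : (fun r : R => (r%:E)^-1) = (fun r => if r == 0%R then +oo else (r^-1)%:E).
  by apply/funext => r; rewrite inver.
apply: measurable_fun_if => //.
- by apply: measurable_fun_eqr.
- apply/measurable_EFinP.
  rewrite setTI.
  have -> : (fun r : R => r == 0%R) @^-1` [set false] = ~` [set 0%R].
    by apply/seteqP; split => r /=; case: eqP.
  apply: open_continuous_measurable_fun.
    apply/closed_openC/accessible_closed_set1/hausdorff_accessible; exact: Rhausdorff.
  move=> r; rewrite inE /= => r0; apply: inv_continuous; exact/eqP.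
Qed.

Definition yf (R : realType) (a b : R -> R) (p : R) (x : R) : R :=
  (p * a x + (1 - p) * b x)%R.

Lemma yf_ge0 (R : realType) (a b : R -> R) p x :
  (forall x, 0 <= a x)%R -> (forall x, 0 <= b x)%R -> (0 <= p <= 1)%R ->
  (0 <= yf a b p x)%R.
Proof.
move=> a0 b0 /andP[p0 p1]; rewrite /yf.
by apply: addr_ge0; apply: mulr_ge0 => //; lra.
Qed.

Lemma m_yf (R : realType) (a b : R -> R) p :
  measurable_fun setT a -> measurable_fun setT b ->
  measurable_fun setT (yf a b p).
Proof.
move=> ma mb; rewrite /yf.
by apply: measurable_funD; apply: measurable_funM => //; exact: measurable_cst.
Qed.

Lemma m_f (R : realType) (a b : R -> R) p :
  measurable_fun setT a -> measurable_fun setT b ->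
  measurable_fun setT (fun x => ((yf a b p x)%:E)^-1).
Proof.
move=> ma mb.
have := measurableT_comp (@measurable_inveR R) (m_yf p ma mb).
by [].

Qed.

Lemma fin_ge0 (R : realType) (x : \bar R) : 0 <= x -> x < +oo -> x = (fine x)%:E.
Proof. by move=> x0 xoo; rewrite fineK // ge0_fin_numE. Qed.

Lemma Gpos (R : realType) (F : probability R R) (a b : R -> R) p :
  is_game F a -> is_game F b -> (0 <= p <= 1)%R ->
  0 < \int[F]_x ((yf a b p x)%:E)^-1.
Proof.
case=> ma a0 _ aoo; case=> mb b0 _ boo hp.
have Ia0 : 0 <= \int[F]_x (a x)%:E by apply: integral_ge0 => x _; rewrite lee_fin.
have Ib0 : 0 <= \int[F]_x (b x)%:E by apply: integral_ge0 => x _; rewrite lee_fin.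
have eIa := fin_ge0 Ia0 aoo.
have eIb := fin_ge0 Ib0 boo.
set ka := fine (\int[F]_x (a x)%:E) in eIa.
set kb := fine (\int[F]_x (b x)%:E) in eIb.
have ka0 : (0 <= ka)%R by rewrite -lee_fin -eIa.
have kb0 : (0 <= kb)%R by rewrite -lee_fin -eIb.
set s := ((ka + kb + 1)^-1)%R.
have s0 : (0 < s)%R by rewrite invr_gt0; clear -ka0 kb0; lra.
have sK : (s * (ka + kb + 1) = 1)%R by rewrite mulVf //; apply/eqP => h; clear -h ka0 kb0; lra.
have mf := m_f p ma mb.
have f0 : forall x, setT x -> 0 <= ((yf a b p x)%:E)^-1.
  by move=> x _; rewrite inve_ge0 lee_fin yf_ge0.
have mab : measurable_fun setT (fun x => (a x)%:E + (b x)%:E).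
  by apply: emeasurable_funD; apply/measurable_EFinP.
have ab0 : forall x, setT x -> 0 <= (a x)%:E + (b x)%:E.
  by move=> x _; apply: adde_ge0; rewrite lee_fin.
have key : (2 * s)%:E <= \int[F]_x ((yf a b p x)%:E)^-1 + (s ^+ 2)%:E * (ka + kb)%:E.
  have -> : (2 * s)%:E = \int[F]_x (cst (2 * s)%:E) x.
    rewrite integral_cst //; have := probability_setT F => /= ->; by rewrite mule1.
  have -> : (ka + kb)%:E = \int[F]_x ((a x)%:E + (b x)%:E).
    rewrite ge0_integralD //; first by rewrite EFinD -eIa -eIb.
    - by move=> x _; rewrite lee_fin.
    - exact/measurable_EFinP.
    - by move=> x _; rewrite lee_fin.
    - exact/measurable_EFinP.
  rewrite -ge0_integralZl_EFin //; last by apply: sqr_ge0.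
  rewrite -ge0_integralD //; last first.
  - by apply: emeasurable_funM => //; exact: measurable_cst.
  - move=> x _; apply: mule_ge0; [rewrite lee_fin; exact: sqr_ge0| exact: ab0].
  apply: ge0_le_integral => //.
  - by move=> x _; rewrite lee_fin; clear -s0; lra.
  - apply: emeasurable_funD => //.
    by apply: emeasurable_funM => //; exact: measurable_cst.
  move=> x _ /=.
  have y0 := yf_ge0 x a0 b0 hp.
  have yw : (yf a b p x <= a x + b x)%R.
    move: hp => /andP[p0 p1]; rewrite /yf.
    have := a0 x; have := b0 x; clear -p0 p1; nra.
  rewrite -EFinD -EFinM.
  have [->|ypos] : yf a b p x = 0%R \/ (0 < yf a b p x)%R.
    by move: y0; rewrite le_eqVlt => /orP[/eqP <-|->]; [left|right].
    by rewrite inve0 addye // leey.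
  rewrite inver (gt_eqF ypos) -EFinD lee_fin.
  set y := yf a b p x in y0 yw ypos *.
  have h : (2 * s <= y^-1 + s ^+ 2 * y)%R.
    rewrite -subr_ge0.
    have -> : (y^-1 + s ^+ 2 * y - 2 * s = (1 - s * y) ^+ 2 / y)%R.
      by field; rewrite gt_eqF.
    by apply: divr_ge0; [apply: sqr_ge0| clear -y0; lra].
  have : (s ^+ 2 * y <= s ^+ 2 * (a x + b x))%R.
    by apply: ler_wpM2l => //; apply: sqr_ge0.
  clear -h; lra.
rewrite lt_neqAle integral_ge0 // andbT.
apply/eqP => G0.
rewrite -G0 add0e -EFinM lee_fin in key.
clear -key sK s0 ka0 kb0.
have : (s * (ka + kb) < 1)%R by nra.
nra.
Qed.

Lemma inv_pos_fin (R : realType) (x : \bar R) : 0 < x ->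
  exists al : R, [/\ (0 <= al)%R, x^-1 = al%:E & x = (al%:E)^-1].
Proof.
case: x => [r||] //.
  rewrite lte_fin => r0; exists r^-1%R; split.
  - by rewrite invr_ge0 ltW.
  - by rewrite inver gt_eqF.
  - by rewrite inver invr_eq0 gt_eqF // invrK.
by move=> _; exists 0%R; split => //; rewrite inve0.
Qed.

Lemma cinv (R : realType) (t al m : R) : (0 <= al)%R -> (m != 0)%R ->
  (t * al ^+ 2 / m ^+ 2)%R%:E * (al%:E)^-1 = (t * al / m ^+ 2)%R%:E.
Proof.
move=> al0 m0.
have [->|alpos] : al = 0%R \/ (0 < al)%R.
  by move: al0; rewrite le_eqVlt => /orP[/eqP <-|->]; [left|right].
  by rewrite expr2 !mulr0 !mul0r mul0e.
rewrite inver gt_eqF // -EFinM; congr (_%:E); field.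
by rewrite m0 gt_eqF.
Qed.

Unset Implicit Arguments.
Unset Strict Implicit.

Theorem lemmaD10 (R : realType) (F : probability R R) (a b : R -> R) :
  is_game F a -> is_game F b ->
  forall p q t : R,
    (0 <= p <= 1)%R -> (0 <= q <= 1)%R -> (0 <= t <= 1)%R ->
    t%:E * hmix F a b p + (1 - t)%:E * hmix F a b q
      <= hmix F a b (t * p + (1 - t) * q)%R.
Proof.
move=> ga gb p q t hp hq ht.
have hE : forall r, hmix F a b r = (\int[F]_x ((yf a b r x)%:E)^-1)^-1 by [].
have [al [al0 hal Gal]] := inv_pos_fin (Gpos ga gb hp).
have [be [be0 hbe Gbe]] := inv_pos_fin (Gpos ga gb hq).
rewrite !hE hal hbe -!EFinM -EFinD.
have [ma a0 _ _] := ga.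
have [mb b0 _ _] := gb.
set y := (t * p + (1 - t) * q)%R.
set m := (t * al + (1 - t) * be)%R.
have hy : (0 <= y <= 1)%R.
  by rewrite /y; move: hp hq ht => /andP[? ?] /andP[? ?] /andP[? ?]; apply/andP; split; nra.
have m0 : (0 <= m)%R by rewrite /m; move: ht => /andP[t0 t1]; clear -t0 t1 al0 be0; nra.
have [->|mpos] : m = 0%R \/ (0 < m)%R.
  by move: m0; rewrite le_eqVlt => /orP[/eqP <-|->]; [left|right].
  by rewrite inve_ge0; apply: integral_ge0 => x _; rewrite inve_ge0 lee_fin; exact: yf_ge0.
have f0 : forall r, (0 <= r <= 1)%R -> forall x, setT x -> 0 <= ((yf a b r x)%:E)^-1.
  by move=> r hr x _; rewrite inve_ge0 lee_fin yf_ge0.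
have c1ge0 : (0 <= t * al ^+ 2 / m ^+ 2)%R.
  by apply: c_ge0; move: ht => /andP[].
have c2ge0 : (0 <= (1 - t) * be ^+ 2 / m ^+ 2)%R.
  by apply: c_ge0; move: ht => /andP[_ t1]; clear -t1; lra.
have Gle : \int[F]_x ((yf a b y x)%:E)^-1 <= (m^-1)%:E.
  apply: le_trans (_ : _ <= \int[F]_x ((t * al ^+ 2 / m ^+ 2)%R%:E * ((yf a b p x)%:E)^-1
      + ((1 - t) * be ^+ 2 / m ^+ 2)%R%:E * ((yf a b q x)%:E)^-1)) _.
    apply: ge0_le_integral => //.
    - exact: f0.
    - exact: m_f.
    - apply: emeasurable_funD; (apply: emeasurable_funM; [exact: measurable_cst|exact: m_f]).
    move=> x _.
    have -> : yf a b y x = (t * yf a b p x + (1 - t) * yf a b q x)%R.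
      by rewrite /yf /y; ring.
    apply: pw => //.
    - exact: yf_ge0.
    - exact: yf_ge0.
  rewrite ge0_integralD //; first last.
  - by apply: emeasurable_funM; [exact: measurable_cst|exact: m_f].
  - by move=> x _; apply: mule_ge0; [rewrite lee_fin| exact: f0].
  - by apply: emeasurable_funM; [exact: measurable_cst|exact: m_f].
  - by move=> x _; apply: mule_ge0; [rewrite lee_fin| exact: f0].
  rewrite !ge0_integralZl_EFin //; try exact: m_f; try exact: f0.
  rewrite Gal Gbe !cinv // ?gt_eqF // -EFinD lee_fin.
  rewrite le_eqVlt; apply/orP; left; apply/eqP.
  by rewrite /m; field; rewrite -/m gt_eqF.
have -> : m%:E = ((m^-1)%R%:E)^-1 by rewrite inver invr_eq0 gt_eqF // invrK.
rewrite lee_pV2 // inE /=.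
- by rewrite lee_fin invr_ge0.
- by apply: integral_ge0; exact: f0.
Qed.
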